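(* Let $\Bbbk$ be a field of characteristic $0$, $B=\bigoplus_{s=1}^N\Bbbk e_s$ ($N\ge2$), and let $(A,\{\!\{-,-\}\!\},\Phi)$ be a quasi-Hamiltonian algebra over $B$ with $\Phi=\sum_s\Phi_s$, $\Phi_s\in e_sAe_s$. Let $A^f$ be the fusion algebra obtained by fusing $e_2$ onto $e_1$ with double bracket $\{\!\{-,-\}\!\}^f=\{\!\{-,-\}\!\}_{ind}+\{\!\{-,-\}\!\}_{fus}$, and set $\operatorname{Tr}(\Phi_s)=\epsilon\Phi_s\epsilon$ for $s\ne2$, $\operatorname{Tr}(\Phi_2)=e_{12}\Phi_2e_{21}$. Then for every $s\ne1,2$ and every $a\in A^f$, $$\{\!\{\operatorname{Tr}(\Phi_s),a\}\!\}^f=\tfrac12\big(ae_s\otimes\operatorname{Tr}(\Phi_s)+a\operatorname{Tr}(\Phi_s)\otimes e_s-e_s\otimes\operatorname{Tr}(\Phi_s)a-\operatorname{Tr}(\Phi_s)\otimes e_sa\big),$$ and, setting $\Phi^f_1=\operatorname{Tr}(\Phi_1)\operatorname{Tr}(\Phi_2)$, for every $a\in A^f$, $$\{\!\{\Phi^f_1,a\}\!\}^f=\tfrac12\big(ae_1\otimes\Phi^f_1+a\Phi^f_1\otimes e_1-e_1\otimes\Phi^f_1a-\Phi^f_1\otimes e_1a\big).$$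
   Context: Conventions: $\otimes=\otimes_\Bbbk$; Sweedler notation $d=d'\otimes d''$; outer bimodule structure $b(a_1\otimes a_2)c=ba_1\otimes a_2c$. A $B$-linear double bracket is a $\Bbbk$-bilinear map $A\times A\to A\otimes A$ vanishing when an argument lies in $B$, with $\{\!\{a,b\}\!\}=-\{\!\{b,a\}\!\}''\otimes\{\!\{b,a\}\!\}'$ and $\{\!\{a,bc\}\!\}=\{\!\{a,b\}\!\}c+b\{\!\{a,c\}\!\}$. With $\tau(a_1\otimes a_2\otimes a_3)=a_3\otimes a_1\otimes a_2$, its triple bracket is $\{\!\{a,b,c\}\!\}=\{\!\{a,\{\!\{b,c\}\!\}'\}\!\}\otimes\{\!\{b,c\}\!\}''+\tau\{\!\{b,\{\!\{c,a\}\!\}'\}\!\}\otimes\{\!\{c,a\}\!\}''+\tau^2\{\!\{c,\{\!\{a,b\}\!\}'\}\!\}\otimes\{\!\{a,b\}\!\}''$; it is quasi-Poisson if $\{\!\{a,b,c\}\!\}=\frac14\sum_s(ce_sa\otimes e_sb\otimes e_s-ce_sa\otimes e_s\otimes be_s-ce_s\otimes ae_sb\otimes e_s+ce_s\otimes ae_s\otimes be_s-e_sa\otimes e_sb\otimes e_sc+e_sa\otimes e_s\otimes be_sc+e_s\otimes ae_sb\otimes e_sc-e_s\otimes ae_s\otimes be_sc)$. Quasi-Hamiltonian: quasi-Poisson with invertible $\Phi=\sum_s\Phi_s$, $\Phi_s\in e_sAe_s$, and $\{\!\{\Phi_s,a\}\!\}=\frac12(ae_s\otimes\Phi_s-e_s\otimes\Phi_sa+a\Phi_s\otimes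 e_s-\Phi_s\otimes e_sa)$ for all $a,s$. Fusion: $\mu=1-e_1-e_2$; $\mathrm{Mat}_2(\Bbbk)$ with matrix units $e_{11}=e_1,e_{12},e_{21},e_{22}=e_2$; $\bar A=A*_{\Bbbk e_1\oplus\Bbbk e_2\oplus\Bbbk\mu}(\mathrm{Mat}_2(\Bbbk)\oplus\Bbbk\mu)$; $\epsilon=1-e_2$; $A^f=\epsilon\bar A\epsilon$. Generators of $A^f$: $t\in\epsilon A\epsilon$, $e_{12}u$ ($u\in e_2A\epsilon$), $ve_{21}$ ($v\in\epsilon Ae_2$), $e_{12}we_{21}$ ($w\in e_2Ae_2$), written $e_+\alpha e_-$. $\{\!\{e_+\alpha e_-,f_+\beta f_-\}\!\}_{ind}=f_+\{\!\{\alpha,\beta\}\!\}'e_-\otimes e_+\{\!\{\alpha,\beta\}\!\}''f_-$. $\operatorname{Tr}(E_1),\operatorname{Tr}(E_2)$ are the derivations $A^f\to A^f\otimes A^f$ with $\operatorname{Tr}(E_1)(t)=te_1\otimes e_1-e_1\otimes e_1t$, $\operatorname{Tr}(E_2)(t)=0$; $\operatorname{Tr}(E_1)(e_{12}u)=e_{12}ue_1\otimes e_1$, $\operatorname{Tr}(E_2)(e_{12}u)=-e_1\otimes e_{12}u$; $\operatorname{Tr}(E_1)(ve_{21})=-e_1\otimes e_1ve_{21}$, $\operatorname{Tr}(E_2)(ve_{21})=ve_{21}\otimes e_1$; $\operatorname{Tr}(E_1)(e_{12}we_{21})=0$, $\operatorname{Tr}(E_2)(e_{12}we_{21})=e_{12}we_{21}e_1\otimes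 e_1-e_1\otimes e_1e_{12}we_{21}$; and $\{\!\{a,b\}\!\}_{fus}=-\frac12\operatorname{Tr}(E_2)(b)'\operatorname{Tr}(E_1)(a)''\otimes\operatorname{Tr}(E_1)(a)'\operatorname{Tr}(E_2)(b)''+\frac12\operatorname{Tr}(E_1)(b)'\operatorname{Tr}(E_2)(a)''\otimes\operatorname{Tr}(E_2)(a)'\operatorname{Tr}(E_1)(b)''$. *)

(* Defs.v *)
From mathcomp Require Import all_boot all_algebra.
Set Implicit Arguments. Unset Strict Implicit. Unset Printing Implicit Defensive.
Import GRing.Theory.
Local Open Scope ring_scope.

(* Tensor powers V (x) V and V (x) V (x) V of a k-vector space V, encoded     *)
(* faithfully through their duals: an element of V(x)V is represented by the  *)
(* functional it induces on k-bilinear forms V x V -> k (pure tensor x (x) y  *)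
(* acts by  phi |-> phi x y).  Two tensors are equal iff they agree on all    *)
(* bilinear forms (tensor products of vector spaces embed in their double     *)
(* dual), see [teq].  Genuine elements of V(x)V are the finite sums of pure   *)
(* tensors, see [is_tensor2].                                                 *)

Section Tensors.
Variables (k : fieldType) (V : algType k).

Definition bilin (phi : V -> V -> k) : Prop :=
  (forall c x1 x2 y, phi (c *: x1 + x2) y = c * phi x1 y + phi x2 y) /\
  (forall c x y1 y2, phi x (c *: y1 + y2) = c * phi x y1 + phi x y2).

Definition trilin (psi : V -> V -> V -> k) : Prop :=
  (forall c x1 x2 y z, psi (c *: x1 + x2) y z = c * psi x1 y z + psi x2 y z) /\
  (forall c x y1 y2 z, psi x (c *: y1 + y2) z = c * psi x y1 z + psi x y2 z) /\
  (forall c x y z1 z2, psi x y (c *: z1 + z2) = c * psi x y z1 + psi x y z2).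

Definition tensor2 := (V -> V -> k) -> k.
Definition tensor3 := (V -> V -> V -> k) -> k.

Definition teq (d1 d2 : tensor2) : Prop :=
  forall phi, bilin phi -> d1 phi = d2 phi.
Definition teq3 (X1 X2 : tensor3) : Prop :=
  forall psi, trilin psi -> X1 psi = X2 psi.

Definition ev2 (x y : V) : tensor2 := fun phi => phi x y.
Definition ev3 (x y z : V) : tensor3 := fun psi => psi x y z.

Definition tzero : tensor2 := fun _ => 0.
Definition tadd (d1 d2 : tensor2) : tensor2 := fun phi => d1 phi + d2 phi.
Definition tscale (c : k) (d : tensor2) : tensor2 := fun phi => c * d phi.
Definition tadd3 (X1 X2 : tensor3) : tensor3 := fun psi => X1 psi + X2 psi.

Definition is_tensor2_in (P : V -> Prop) (d : tensor2) : Prop :=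
  exists s : seq (k * V * V),
    (forall t, t \in s -> P t.1.2 /\ P t.2) /\
    teq d (fun phi => \sum_(t <- s) t.1.1 * phi t.1.2 t.2).

(* d' (x) d''  |->  d'' (x) d' *)
Definition tswap (d : tensor2) : tensor2 := fun phi => d (fun x y => phi y x).

(* outer bimodule structure: b (d' (x) d'') c = b d' (x) d'' c *)
Definition lmul (b : V) (d : tensor2) : tensor2 :=
  fun phi => d (fun x y => phi (b * x) y).
Definition rmul (d : tensor2) (c : V) : tensor2 :=
  fun phi => d (fun x y => phi x (y * c)).

(* the product  (y, x) |-> y' x'' (x) x' y''  (Sweedler notation) *)
Definition tprod (y x : tensor2) : tensor2 :=
  fun phi => x (fun x1 x2 => y (fun y1 y2 => phi (y1 * x2) (x1 * y2))).

(* tau (a1 (x) a2 (x) a3) = a3 (x) a1 (x) a2 *)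
Definition tau (X : tensor3) : tensor3 :=
  fun psi => X (fun a1 a2 a3 => psi a3 a1 a2).

(* {{a, d'}} (x) d'' *)
Definition tens_br (br : V -> V -> tensor2) (a : V) (d : tensor2) : tensor3 :=
  fun psi => d (fun x y => br a x (fun u v => psi u v y)).

Definition triple_br (br : V -> V -> tensor2) (a b c : V) : tensor3 :=
  tadd3 (tens_br br a (br b c))
    (tadd3 (tau (tens_br br b (br c a))) (tau (tau (tens_br br c (br a b))))).

(* A double bracket on the subspace P of V (a subalgebra with unit), linear *)
(* over the subalgebra spanned by the idempotents in [Bs] (i.e. vanishing when  *)
(* an argument lies in it).                                                   *)
Definition double_bracket_on (P : V -> Prop) (n : nat) (Bs : 'I_n -> V)
    (br : V -> V -> tensor2) : Prop :=
  (forall a b, P a -> P b -> is_tensor2_in P (br a b)) /\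
  (forall c a1 a2 b, P a1 -> P a2 -> P b ->
     teq (br (c *: a1 + a2) b) (tadd (tscale c (br a1 b)) (br a2 b))) /\
  (forall c a b1 b2, P a -> P b1 -> P b2 ->
     teq (br a (c *: b1 + b2)) (tadd (tscale c (br a b1)) (br a b2))) /\
  (forall (c : 'I_n -> k) a, P a ->
     teq (br (\sum_i c i *: Bs i) a) tzero /\ teq (br a (\sum_i c i *: Bs i)) tzero) /\
  (forall a b, P a -> P b -> teq (br a b) (tscale (-1) (tswap (br b a)))) /\
  (forall a b c, P a -> P b -> P c ->
     teq (br a (b * c)) (tadd (rmul (br a b) c) (lmul b (br a c)))).

End Tensors.

Section QuasiHam.
Variables (k : fieldType) (A : algType k) (N : nat) (e : 'I_N -> A).

Definition idempotent_family : Prop :=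
  (forall s t, e s * e t = if s == t then e s else 0) /\ \sum_s e s = 1.

Definition qP_rhs (a b c : A) : tensor3 A :=
  fun psi => 4%:R^-1 * \sum_s
   (  psi (c * e s * a) (e s * b) (e s)
    - psi (c * e s * a) (e s) (b * e s)
    - psi (c * e s) (a * e s * b) (e s)
    + psi (c * e s) (a * e s) (b * e s)
    - psi (e s * a) (e s * b) (e s * c)
    + psi (e s * a) (e s) (b * e s * c)
    + psi (e s) (a * e s * b) (e s * c)
    - psi (e s) (a * e s) (b * e s * c)).

Definition quasi_Poisson (br : A -> A -> tensor2 A) : Prop :=
  double_bracket_on (fun _ => True) e br /\
  forall a b c, teq3 (triple_br br a b c) (qP_rhs a b c).

Definition moment_rhs (V : algType k) (es F a : V) : tensor2 V :=
  fun phi => 2%:R^-1 *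
    (phi (a * es) F - phi es (F * a) + phi (a * F) es - phi F (es * a)).

Definition quasi_Hamiltonian (br : A -> A -> tensor2 A) (Phi : 'I_N -> A) : Prop :=
  quasi_Poisson br /\
  (forall s, e s * Phi s * e s = Phi s) /\
  (exists Psi : A, (\sum_s Phi s) * Psi = 1 /\ Psi * (\sum_s Phi s) = 1) /\
  (forall s a, teq (br (Phi s) a) (moment_rhs (e s) (Phi s) a)).

End QuasiHam.

(* Mat_2(k) (+) k mu *)
Definition MatMu (k : fieldType) : algType k := ('M[k]_2 * k^o)%type.
Definition Mat_e11 (k : fieldType) : MatMu k := (delta_mx 0 0, 0).
Definition Mat_e12 (k : fieldType) : MatMu k := (delta_mx 0 1, 0).
Definition Mat_e21 (k : fieldType) : MatMu k := (delta_mx 1 0, 0).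
Definition Mat_e22 (k : fieldType) : MatMu k := (delta_mx 1 1, 0).

Definition alg_hom (k : fieldType) (U W : algType k) (f : U -> W) : Prop :=
  (forall x y, f (x + y) = f x + f y) /\ (forall (c : k) x, f (c *: x) = c *: f x) /\
  (forall x y, f (x * y) = f x * f y) /\ f 1 = 1.

(* (Abar, iA, jM) is the free product  A *_{k e1 + k e2 + k mu} (Mat_2(k) + k mu)  *)
(* (pushout of unital k-algebras), where e1, e2 are the given elements of A   *)
(* and mu = 1 - e1 - e2 (which is then automatically matched as well).        *)
Definition is_free_product (k : fieldType) (A Abar : algType k) (e1 e2 : A)
    (iA : A -> Abar) (jM : MatMu k -> Abar) : Prop :=
  alg_hom iA /\ alg_hom jM /\ iA e1 = jM (Mat_e11 k) /\ iA e2 = jM (Mat_e22 k) /\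
  forall (C : algType k) (f : A -> C) (g : MatMu k -> C),
    alg_hom f -> alg_hom g -> f e1 = g (Mat_e11 k) -> f e2 = g (Mat_e22 k) ->
    exists h : Abar -> C,
      (alg_hom h /\ (forall x, h (iA x) = f x) /\ (forall y, h (jM y) = g y)) /\
      forall h' : Abar -> C,
        alg_hom h' -> (forall x, h' (iA x) = f x) -> (forall y, h' (jM y) = g y) ->
        forall z, h' z = h z.

Section Fusion.
Variables (k : fieldType) (A Abar : algType k) (n : nat) (e : 'I_n.+2 -> A)
  (iA : A -> Abar) (jM : MatMu k -> Abar).

(* e_1 = e ord0, e_2 = e 1 *)
Definition e1A : A := e ord0.
Definition e2A : A := e 1.
Definition epsA : A := 1 - e2A.
Definition E12 : Abar := jM (Mat_e12 k).
Definition E21 : Abar := jM (Mat_e21 k).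
Definition e1b : Abar := iA e1A.
Definition eps : Abar := 1 - iA e2A.

(* A^f = eps Abar eps *)
Definition inAf (x : Abar) : Prop := eps * x * eps = x.

(* generators e_+ alpha e_- : p = true means e_+ = e12 (else eps), q = true   *)
(* means e_- = e21 (else eps); alpha lies in the corresponding corner of A.   *)
Definition gen_ok (p q : bool) (alpha : A) : Prop :=
  (if p then e2A else epsA) * alpha * (if q then e2A else epsA) = alpha.
Definition eplus (p : bool) : Abar := if p then E12 else eps.
Definition eminus (q : bool) : Abar := if q then E21 else eps.
Definition gen (p q : bool) (alpha : A) : Abar := eplus p * iA alpha * eminus q.

Definition br_ind (brA : A -> A -> tensor2 A) (p q : bool) (alpha : A)
    (p' q' : bool) (beta : A) : tensor2 Abar :=
  fun phi => brA alpha beta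
    (fun y1 y2 => phi (eplus p' * iA y1 * eminus q) (eplus p * iA y2 * eminus q')).

Definition TrE1 (p q : bool) (alpha : A) : tensor2 Abar :=
  let x := gen p q alpha in
  match p, q with
  | false, false => tadd (ev2 (x * e1b) e1b) (tscale (-1) (ev2 e1b (e1b * x)))
  | true, false => ev2 (x * e1b) e1b
  | false, true => tscale (-1) (ev2 e1b (e1b * x))
  | true, true => @tzero _ Abar
  end.
Definition TrE2 (p q : bool) (alpha : A) : tensor2 Abar :=
  let x := gen p q alpha in
  match p, q with
  | false, false => @tzero _ Abar
  | true, false => tscale (-1) (ev2 e1b x)
  | false, true => ev2 x e1b
  | true, true => tadd (ev2 (x * e1b) e1b) (tscale (-1) (ev2 e1b (e1b * x)))
  end.

Definition br_fus (p q : bool) (alpha : A) (p' q' : bool) (beta : A) : tensor2 Abar :=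
  tadd (tscale (- 2%:R^-1) (tprod (TrE2 p' q' beta) (TrE1 p q alpha)))
       (tscale (2%:R^-1) (tprod (TrE1 p' q' beta) (TrE2 p q alpha))).

(* B^f = k e1 + sum_{s >= 3} k e_s, the idempotents of A^f *)
Definition Bf (s : 'I_n.+2) : Abar := if s == 1 then 0 else iA (e s).

Definition is_fusion_bracket (brA : A -> A -> tensor2 A) (brf : Abar -> Abar -> tensor2 Abar)
  : Prop :=
  double_bracket_on inAf Bf brf /\
  forall p q alpha p' q' beta, gen_ok p q alpha -> gen_ok p' q' beta ->
    teq (brf (gen p q alpha) (gen p' q' beta))
        (tadd (br_ind brA p q alpha p' q' beta) (br_fus p q alpha p' q' beta)).

Definition TrPhi (Phi : 'I_n.+2 -> A) (s : 'I_n.+2) : Abar :=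
  if s == 1 then E12 * iA (Phi s) * E21 else eps * iA (Phi s) * eps.

End Fusion.

(* Main.v *)
From HB Require Import structures.
Require Import Defs.
From mathcomp Require Import all_boot all_algebra.
From mathcomp Require Import ring.
From Stdlib Require Import ClassicalEpsilon.
Set Implicit Arguments. Unset Strict Implicit. Unset Printing Implicit Defensive.
Import GRing.Theory.
Local Open Scope ring_scope.

Section Mat.
Variable k : fieldType.
Lemma matmul (x y : MatMu k) : x * y = (x.1 *m y.1, x.2 * y.2).
Proof. by []. Qed.
Lemma mat12_21 : Mat_e12 k * Mat_e21 k = Mat_e11 k.
Proof. by rewrite matmul /= mul_delta_mx mulr0. Qed.
Lemma mat21_12 : Mat_e21 k * Mat_e12 k = Mat_e22 k.
Proof. by rewrite matmul /= mul_delta_mx mulr0. Qed.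
Lemma mat11_12 : Mat_e11 k * Mat_e12 k = Mat_e12 k.
Proof. by rewrite matmul /= mul_delta_mx mulr0. Qed.
Lemma mat12_22 : Mat_e12 k * Mat_e22 k = Mat_e12 k.
Proof. by rewrite matmul /= mul_delta_mx mulr0. Qed.
Lemma mat22_21 : Mat_e22 k * Mat_e21 k = Mat_e21 k.
Proof. by rewrite matmul /= mul_delta_mx mulr0. Qed.
Lemma mat21_11 : Mat_e21 k * Mat_e11 k = Mat_e21 k.
Proof. by rewrite matmul /= mul_delta_mx mulr0. Qed.
Lemma mat22_12 : Mat_e22 k * Mat_e12 k = 0.
Proof. by rewrite matmul /= mul_delta_mx_0 // mulr0. Qed.
Lemma mat12_12 : Mat_e12 k * Mat_e12 k = 0.
Proof. by rewrite matmul /= mul_delta_mx_0 // mulr0. Qed.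
Lemma mat_decomp (m : MatMu k) : m =
  m.1 0 0 *: Mat_e11 k + m.1 0 1 *: Mat_e12 k + m.1 1 0 *: Mat_e21 k + m.1 1 1 *: Mat_e22 k
  + m.2 *: (1 - Mat_e11 k - Mat_e22 k).
Proof.
case: m => M c /=; congr pair => /=.
  apply/matrixP => i j; rewrite !mxE /=.
  have Hi : (i == 0) || (i == 1) by case: i => [[|[|]]].
  have Hj : (j == 0) || (j == 1) by case: j => [[|[|]]].
  by case/orP: Hi => /eqP->; case/orP: Hj => /eqP-> /=; rewrite ?(mulr1, mulr0, addr0, add0r, subr0, subrr, oppr0).
by rewrite !scaler0 !add0r !subr0 /GRing.scale /= mulr1.
Qed.
Lemma mat12_11 : Mat_e12 k * Mat_e11 k = 0.
Proof. by rewrite matmul /= mul_delta_mx_0 // mulr0. Qed.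
Lemma mat11_21 : Mat_e11 k * Mat_e21 k = 0.
Proof. by rewrite matmul /= mul_delta_mx_0 // mulr0. Qed.
Lemma mat21_22 : Mat_e21 k * Mat_e22 k = 0.
Proof. by rewrite matmul /= mul_delta_mx_0 // mulr0. Qed.
Lemma mat21_21 : Mat_e21 k * Mat_e21 k = 0.
Proof. by rewrite matmul /= mul_delta_mx_0 // mulr0. Qed.
End Mat.


Section Bil.
Variables (k : fieldType) (V : algType k).
Implicit Types (phi : V -> V -> k).

Lemma self_add0 (x : k) : x = x + x -> x = 0.
Proof. by move=> h; have := subrr x; rewrite {1}h addrK. Qed.

Lemma phiDl phi : bilin phi -> forall x y z, phi (x + y) z = phi x z + phi y z.
Proof. by case=> H _ x y z; have := H 1 x y z; rewrite scale1r mul1r. Qed.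
Lemma phiZl phi : bilin phi -> forall c x z, phi (c *: x) z = c * phi x z.
Proof.
case=> H _ c x z; have := H c x 0 z; rewrite addr0 => ->.
have := H 1 0 0 z; rewrite scale1r addr0 mul1r => /self_add0 ->.
by rewrite addr0.
Qed.
Lemma phiDr phi : bilin phi -> forall x y z, phi z (x + y) = phi z x + phi z y.
Proof. by case=> _ H x y z; have := H 1 z x y; rewrite scale1r mul1r. Qed.
Lemma phiZr phi : bilin phi -> forall c x z, phi z (c *: x) = c * phi z x.
Proof.
case=> _ H c x z; have := H c z x 0; rewrite addr0 => ->.
have := H 1 z 0 0; rewrite scale1r addr0 mul1r => /self_add0 ->.
by rewrite addr0.
Qed.
Lemma phi0l phi : bilin phi -> forall z, phi 0 z = 0.
Proof. by move=> H z; rewrite -(scale0r (0 : V)) (phiZl H) mul0r. Qed.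
Lemma phi0r phi : bilin phi -> forall z, phi z 0 = 0.
Proof. by move=> H z; rewrite -(scale0r (0 : V)) (phiZr H) mul0r. Qed.
Lemma phiNl phi : bilin phi -> forall x z, phi (- x) z = - phi x z.
Proof. by move=> H x z; rewrite -scaleN1r (phiZl H) mulN1r. Qed.
Lemma phiNr phi : bilin phi -> forall x z, phi z (- x) = - phi z x.
Proof. by move=> H x z; rewrite -scaleN1r (phiZr H) mulN1r. Qed.

Lemma bil_of phi : (forall x y z, phi (x + y) z = phi x z + phi y z) ->
  (forall c x z, phi (c *: x) z = c * phi x z) ->
  (forall x y z, phi z (x + y) = phi z x + phi z y) ->
  (forall c x z, phi z (c *: x) = c * phi z x) -> bilin phi.
Proof. by move=> H1 H2 H3 H4; split=> *; rewrite ?H1 ?H2 ?H3 ?H4. Qed.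

Lemma bil_rmul phi c : bilin phi -> bilin (fun x y => phi x (y * c)).
Proof.
move=> H; apply: bil_of => *; rewrite ?mulrDl -?scalerAl ?(phiDl H) ?(phiZl H) ?(phiDr H) ?(phiZr H) //.
Qed.
Lemma bil_lmul phi c : bilin phi -> bilin (fun x y => phi (c * x) y).
Proof.
move=> H; apply: bil_of => *; rewrite ?mulrDr -?scalerAr ?(phiDl H) ?(phiZl H) ?(phiDr H) ?(phiZr H) //.
Qed.
Lemma bil_irmul phi c : bilin phi -> bilin (fun x y => phi (x * c) y).
Proof.
move=> H; apply: bil_of => *; rewrite ?mulrDl -?scalerAl ?(phiDl H) ?(phiZl H) ?(phiDr H) ?(phiZr H) //.
Qed.
Lemma bil_ilmul phi c : bilin phi -> bilin (fun x y => phi x (c * y)).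
Proof.
move=> H; apply: bil_of => *; rewrite ?mulrDr -?scalerAr ?(phiDl H) ?(phiZl H) ?(phiDr H) ?(phiZr H) //.
Qed.
Lemma bil_swap phi : bilin phi -> bilin (fun x y => phi y x).
Proof. by move=> [H1 H2]; split=> *; rewrite ?H1 ?H2. Qed.

Lemma tensor_zero (d : tensor2 V) P : is_tensor2_in P d -> d (fun _ _ => 0) = 0.
Proof.
case=> s [_ H]; rewrite H; last by split=> *; rewrite mulr0 addr0.
by rewrite big1 // => t _; rewrite mulr0.
Qed.
End Bil.


Section Main.
Variables (k : fieldType) (n : nat) (A : algType k) (e : 'I_n.+2 -> A)
  (brA : A -> A -> tensor2 A) (Phi : 'I_n.+2 -> A)
  (Abar : algType k) (iA : A -> Abar) (jM : MatMu k -> Abar)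
  (brf : Abar -> Abar -> tensor2 Abar).
Hypothesis Hidem : idempotent_family e.
Hypothesis HqH : quasi_Hamiltonian e brA Phi.
Hypothesis Hfree : is_free_product (e1A e) (e2A e) iA jM.
Hypothesis Hfus : is_fusion_bracket e iA jM brA brf.

Local Notation e1 := (iA (e1A e)).
Local Notation e2 := (iA (e2A e)).
Local Notation eps := (eps e iA).
Local Notation E12 := (E12 jM).
Local Notation E21 := (E21 jM).
Local Notation inAf := (inAf e iA).
Local Notation gen := (gen e iA jM).
Local Notation eplus := (eplus e iA jM).
Local Notation eminus := (eminus e iA jM).
Local Notation gen_ok := (gen_ok e).

Lemma iA_hom : alg_hom iA. Proof. by case: Hfree. Qed.
Lemma jM_hom : alg_hom jM. Proof. by case: Hfree => _ []. Qed.
Lemma iAD x y : iA (x + y) = iA x + iA y. Proof. by case: iA_hom. Qed.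
Lemma iAZ c x : iA (c *: x) = c *: iA x. Proof. by case: iA_hom => _ []. Qed.
Lemma iAM x y : iA (x * y) = iA x * iA y. Proof. by case: iA_hom => _ [_ []]. Qed.
Lemma iA1 : iA 1 = 1. Proof. by case: iA_hom => _ [_ []]. Qed.
Lemma iA0 : iA 0 = 0.
Proof. by have := iAZ 0 0; rewrite !scale0r. Qed.
Lemma iAN x : iA (- x) = - iA x.
Proof. by rewrite -scaleN1r iAZ scaleN1r. Qed.
Lemma iAB x y : iA (x - y) = iA x - iA y.
Proof. by rewrite iAD iAN. Qed.
Lemma jMD x y : jM (x + y) = jM x + jM y. Proof. by case: jM_hom. Qed.
Lemma jMZ c x : jM (c *: x) = c *: jM x. Proof. by case: jM_hom => _ []. Qed.
Lemma jMM x y : jM (x * y) = jM x * jM y. Proof. by case: jM_hom => _ [_ []]. Qed.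
Lemma jM1 : jM 1 = 1. Proof. by case: jM_hom => _ [_ []]. Qed.
Lemma jM0 : jM 0 = 0.
Proof. by have := jMZ 0 0; rewrite !scale0r. Qed.
Lemma jMN x : jM (- x) = - jM x.
Proof. by rewrite -scaleN1r jMZ scaleN1r. Qed.
Lemma jMB x y : jM (x - y) = jM x - jM y.
Proof. by rewrite jMD jMN. Qed.
Lemma iA_e1 : e1 = jM (Mat_e11 k). Proof. by case: Hfree => _ [_ []]. Qed.
Lemma iA_e2 : e2 = jM (Mat_e22 k). Proof. by case: Hfree => _ [_ [_ []]]. Qed.

Lemma eA s t : e s * e t = if s == t then e s else 0.
Proof. by case: Hidem. Qed.
Lemma eAA s : e s * e s = e s. Proof. by rewrite eA eqxx. Qed.
Lemma eA0 s t : s != t -> e s * e t = 0. Proof. by rewrite eA => /negbTE->. Qed.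
Lemma o01 : (ord0 : 'I_n.+2) != 1%R.
Proof. by []. Qed.

End Main.
Section Rel.
Variables (k : fieldType) (n : nat) (A : algType k) (e : 'I_n.+2 -> A)
  (Abar : algType k) (iA : A -> Abar) (jM : MatMu k -> Abar).
Hypothesis Hidem : idempotent_family e.
Hypothesis Hfree : is_free_product (e1A e) (e2A e) iA jM.
Local Notation e1 := (iA (e1A e)).
Local Notation e2 := (iA (e2A e)).
Local Notation eps := (eps e iA).
Local Notation E12 := (E12 jM).
Local Notation E21 := (E21 jM).

Let jMM := jMM Hfree.
Let jM0 := jM0 Hfree.
Let iAM := iAM Hfree.
Let e1E := iA_e1 Hfree.
Let e2E := iA_e2 Hfree.

Lemma E12E21 : E12 * E21 = e1. Proof using Hidem Hfree. by rewrite /E12 /E21 -jMM mat12_21 e1E. Qed.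
Lemma E21E12 : E21 * E12 = e2. Proof using Hidem Hfree. by rewrite /E12 /E21 -jMM mat21_12 e2E. Qed.
Lemma e1E12 : e1 * E12 = E12. Proof using Hidem Hfree. by rewrite /E12 e1E -jMM mat11_12. Qed.
Lemma E12e2 : E12 * e2 = E12. Proof using Hidem Hfree. by rewrite /E12 e2E -jMM mat12_22. Qed.
Lemma e2E21 : e2 * E21 = E21. Proof using Hidem Hfree. by rewrite /E21 e2E -jMM mat22_21. Qed.
Lemma E21e1 : E21 * e1 = E21. Proof using Hidem Hfree. by rewrite /E21 e1E -jMM mat21_11. Qed.
Lemma E12e1 : E12 * e1 = 0. Proof using Hidem Hfree. by rewrite /E12 e1E -jMM mat12_11 jM0. Qed.
Lemma e2E12 : e2 * E12 = 0. Proof using Hidem Hfree. by rewrite /E12 e2E -jMM mat22_12 jM0. Qed.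
Lemma E21e2 : E21 * e2 = 0. Proof using Hidem Hfree. by rewrite /E21 e2E -jMM mat21_22 jM0. Qed.
Lemma e1E21 : e1 * E21 = 0. Proof using Hidem Hfree. by rewrite /E21 e1E -jMM mat11_21 jM0. Qed.
Lemma E12E12 : E12 * E12 = 0. Proof using Hidem Hfree. by rewrite /E12 -jMM mat12_12 jM0. Qed.
Lemma E21E21 : E21 * E21 = 0. Proof using Hidem Hfree. by rewrite /E21 -jMM mat21_21 jM0. Qed.
Lemma e1e1 : e1 * e1 = e1. Proof using Hidem Hfree. by rewrite -iAM /e1A (eAA Hidem). Qed.
Lemma e2e2 : e2 * e2 = e2. Proof using Hidem Hfree. by rewrite -iAM /e2A (eAA Hidem). Qed.
Lemma e1e2 : e1 * e2 = 0. Proof using Hidem Hfree. by rewrite -iAM /e1A /e2A (eA0 Hidem) ?(iA0 Hfree). Qed.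
Lemma e2e1 : e2 * e1 = 0. Proof using Hidem Hfree. by rewrite -iAM /e1A /e2A (eA0 Hidem) ?(iA0 Hfree) // eq_sym. Qed.
Lemma epsE : eps = 1 - e2. Proof using Hidem Hfree. by []. Qed.
Lemma eps_iA : eps = iA (epsA e). Proof using Hidem Hfree. by rewrite /epsA (iAB Hfree) (iA1 Hfree). Qed.
Lemma epsE12 : eps * E12 = E12. Proof using Hidem Hfree. by rewrite epsE mulrBl mul1r e2E12 subr0. Qed.
Lemma E12eps : E12 * eps = 0. Proof using Hidem Hfree. by rewrite epsE mulrBr mulr1 E12e2 subrr. Qed.
Lemma epsE21 : eps * E21 = 0. Proof using Hidem Hfree. by rewrite epsE mulrBl mul1r e2E21 subrr. Qed.
Lemma E21eps : E21 * eps = E21. Proof using Hidem Hfree. by rewrite epsE mulrBr mulr1 E21e2 subr0. Qed.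
Lemma epseps : eps * eps = eps. Proof using Hidem Hfree. by rewrite epsE mulrBl mul1r mulrBr mulr1 e2e2 subrr subr0. Qed.
Lemma epse1 : eps * e1 = e1. Proof using Hidem Hfree. by rewrite epsE mulrBl mul1r e2e1 subr0. Qed.
Lemma e1eps : e1 * eps = e1. Proof using Hidem Hfree. by rewrite epsE mulrBr mulr1 e1e2 subr0. Qed.
Lemma epse2 : eps * e2 = 0. Proof using Hidem Hfree. by rewrite epsE mulrBl mul1r e2e2 subrr. Qed.
Lemma e2eps : e2 * eps = 0. Proof using Hidem Hfree. by rewrite epsE mulrBr mulr1 e2e2 subrr. Qed.

End Rel.

Section Gen.
Variables (k : fieldType) (n : nat) (A : algType k) (e : 'I_n.+2 -> A)
  (Abar : algType k) (iA : A -> Abar) (jM : MatMu k -> Abar)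
  (brf : Abar -> Abar -> tensor2 Abar).
Hypothesis Hidem : idempotent_family e.
Hypothesis Hfree : is_free_product (e1A e) (e2A e) iA jM.
Hypothesis Hdb : double_bracket_on (inAf e iA) (Bf e iA) brf.
Local Notation e1 := (iA (e1A e)).
Local Notation e2 := (iA (e2A e)).
Local Notation eps := (eps e iA).
Local Notation E12 := (E12 jM).
Local Notation E21 := (E21 jM).
Local Notation inAf := (inAf e iA).
Local Notation gen := (gen e iA jM).
Local Notation eplus := (eplus e iA jM).
Local Notation eminus := (eminus e iA jM).
Local Notation gen_ok := (gen_ok e).

Variables (X es : Abar).
Hypothesis HX : inAf X.
Definition Mom a := teq (brf X a) (moment_rhs es X a).
Hypothesis Hgen : forall p q b, gen_ok p q b -> Mom (gen p q b).

Lemma inAfE a : inAf a <-> eps * a = a /\ a * eps = a.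
Proof.
split.
  move=> H; split.
    by rewrite -H !mulrA (epseps Hidem Hfree).
  by rewrite -H -!mulrA (epseps Hidem Hfree).
by case=> H1 H2; rewrite /Defs.inAf H1 H2.
Qed.
Lemma inAf0 : inAf 0. Proof. by rewrite /Defs.inAf mulr0 mul0r. Qed.
Lemma inAfD a b : inAf a -> inAf b -> inAf (a + b).
Proof. by rewrite /Defs.inAf => Ha Hb; rewrite (mulrDr eps) (mulrDl _ _ eps) Ha Hb. Qed.
Lemma inAfZ c a : inAf a -> inAf (c *: a).
Proof. by rewrite /Defs.inAf => Ha; rewrite -scalerAr -scalerAl Ha. Qed.
Lemma inAfM a b : inAf a -> inAf b -> inAf (a * b).
Proof.
move=> /inAfE [Ha1 Ha2] /inAfE [Hb1 Hb2]; apply/inAfE; split.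
  by rewrite mulrA Ha1. by rewrite -mulrA Hb2.
Qed.
Lemma eps_eplus p : eps * eplus p = eplus p.
Proof. case: p => /=; [exact: (epsE12 Hidem Hfree) | exact: (epseps Hidem Hfree)]. Qed.
Lemma eminus_eps q : eminus q * eps = eminus q.
Proof. case: q => /=; [exact: (E21eps Hidem Hfree) | exact: (epseps Hidem Hfree)]. Qed.
Lemma inAf_corner p q z : inAf (eplus p * z * eminus q).
Proof. by apply/inAfE; rewrite !mulrA eps_eplus -!mulrA eminus_eps. Qed.

Let Hlin2 : forall c a b1 b2, inAf a -> inAf b1 -> inAf b2 ->
     teq (brf a (c *: b1 + b2)) (tadd (tscale c (brf a b1)) (brf a b2)).
Proof. by case: Hdb => _ [_ []]. Qed.
Let HBlin : forall (c : 'I_n.+2 -> k) a, inAf a ->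
     teq (brf (\sum_i c i *: Bf e iA i) a) (@tzero _ Abar) /\ teq (brf a (\sum_i c i *: Bf e iA i)) (@tzero _ Abar).
Proof. by case: Hdb => _ [_ [_ []]]. Qed.
Let Hleib : forall a b c, inAf a -> inAf b -> inAf c ->
     teq (brf a (b * c)) (tadd (rmul (brf a b) c) (lmul b (brf a c))).
Proof. by case: Hdb => _ [_ [_ [_ []]]]. Qed.

Lemma Mom0 : Mom 0.
Proof.
move=> phi Hphi; have [_ H] := HBlin (fun _ => 0) HX.
rewrite (_ : \sum_i _ = 0) in H; last by rewrite big1 // => i _; rewrite scale0r.
rewrite H // /moment_rhs /tzero !mulr0 !mul0r !(phi0l Hphi) !(phi0r Hphi).
by rewrite subrr add0r subrr mulr0.
Qed.

Lemma MomD a b : inAf a -> inAf b -> Mom a -> Mom b -> Mom (a + b).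
Proof.
move=> Ha Hb Ma Mb phi Hphi; have := Hlin2 1 HX Ha Hb; rewrite scale1r => ->//.
rewrite /tadd /tscale mul1r Ma // Mb // /moment_rhs.
rewrite !mulrDl !mulrDr !(phiDl Hphi) !(phiDr Hphi); ring.
Qed.

Lemma MomZ c a : inAf a -> Mom a -> Mom (c *: a).
Proof.
move=> Ha Ma phi Hphi; have := Hlin2 c HX Ha inAf0; rewrite addr0 => ->//.
rewrite /tadd /tscale Ma // Mom0 // /moment_rhs.
rewrite -!scalerAl -!scalerAr !(phiZl Hphi) !(phiZr Hphi) !mulr0 !mul0r !(phi0l Hphi) !(phi0r Hphi).
ring.
Qed.

Lemma MomM a b : inAf a -> inAf b -> Mom a -> Mom b -> Mom (a * b).
Proof.
move=> Ha Hb Ma Mb phi Hphi; rewrite Hleib // /tadd /rmul /lmul.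
rewrite Ma; last exact: bil_rmul.
rewrite Mb; last exact: bil_lmul.
rewrite /moment_rhs !mulrA; ring.
Qed.

Definition Qc z := forall p q, Mom (eplus p * z * eminus q).

Lemma QD z w : Qc z -> Qc w -> Qc (z + w).
Proof.
move=> Hz Hw p q; rewrite (mulrDr (eplus p)) (mulrDl _ _ (eminus q)).
by apply: MomD; [exact: inAf_corner|exact: inAf_corner|exact: Hz|exact: Hw].
Qed.
Lemma QZ c z : Qc z -> Qc (c *: z).
Proof.
move=> Hz p q; rewrite -scalerAr -scalerAl; apply: MomZ => //; exact: inAf_corner.
Qed.
Lemma QM z w : Qc z -> Qc w -> Qc (z * w).
Proof.
move=> Hz Hw p q.
have H1 : eps * eps + E21 * E12 = 1.
  by rewrite (epseps Hidem Hfree) (E21E12 Hidem Hfree) /Defs.eps subrK.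
have -> : eplus p * (z * w) * eminus q =
   (eplus p * z * eminus false) * (eplus false * w * eminus q) +
   (eplus p * z * eminus true) * (eplus true * w * eminus q).
  rewrite -{1}(mulr1 z) -H1 (mulrDr z) (mulrDl _ _ w) (mulrDr (eplus p)) (mulrDl _ _ (eminus q)).
  by rewrite /= !mulrA.
apply: MomD; try apply: inAfM; try apply: MomM; by [exact: inAf_corner| apply: Hz| apply: Hw].
Qed.

Lemma Q_iA x : Qc (iA x).
Proof.
move=> p q.
have eAid : epsA e * epsA e = epsA e.
  by rewrite /epsA mulrBl mul1r mulrBr mulr1 /e2A (eAA Hidem) subrr subr0.
have LL : forall b : bool, (if b then e2A e else epsA e) * (if b then e2A e else epsA e)
   = (if b then e2A e else epsA e).
  by case; rewrite // /e2A (eAA Hidem).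
have Hp : forall b : bool, eplus b * iA (if b then e2A e else epsA e) = eplus b.
  case => /=; first by rewrite (E12e2 Hidem Hfree).
  by rewrite -(eps_iA Hidem Hfree) (epseps Hidem Hfree).
have Hq : forall b : bool, iA (if b then e2A e else epsA e) * eminus b = eminus b.
  case => /=; first by rewrite (e2E21 Hidem Hfree).
  by rewrite -(eps_iA Hidem Hfree) (epseps Hidem Hfree).
have -> : eplus p * iA x * eminus q =
   gen p q ((if p then e2A e else epsA e) * x * (if q then e2A e else epsA e)).
  by rewrite /Defs.gen !(iAM Hfree) !mulrA Hp -!mulrA Hq.
apply: Hgen; rewrite /Defs.gen_ok.
by rewrite !mulrA LL -!mulrA LL.
Qed.

Lemma Q_E12 : Qc E12.
Proof.
have Me1 : Mom e1.
  have := Q_iA (e1A e) false false; rewrite /=.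
  by rewrite (epse1 Hidem Hfree) (e1eps Hidem Hfree).
have M0 := Mom0.
case; case => /=.
- by rewrite (E12E12 Hidem Hfree) mul0r.
- by rewrite (E12E12 Hidem Hfree) mul0r.
- by rewrite (epsE12 Hidem Hfree) (E12E21 Hidem Hfree).
- by rewrite (epsE12 Hidem Hfree) (E12eps Hidem Hfree).
Qed.

Lemma Q_E21 : Qc E21.
Proof.
have Me1 : Mom e1.
  have := Q_iA (e1A e) false false; rewrite /=.
  by rewrite (epse1 Hidem Hfree) (e1eps Hidem Hfree).
have M0 := Mom0.
case; case => /=.
- by rewrite -mulrA (E21E21 Hidem Hfree) mulr0.
- by rewrite (E12E21 Hidem Hfree) (e1eps Hidem Hfree).
- by rewrite -mulrA (E21E21 Hidem Hfree) mulr0.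
- by rewrite (epsE21 Hidem Hfree) mul0r.
Qed.

Lemma Q_jM m : Qc (jM m).
Proof.
rewrite (mat_decomp m) !(jMD Hfree) !(jMZ Hfree) !(jMB Hfree) (jM1 Hfree).
rewrite -(iA_e1 Hfree) -(iA_e2 Hfree) -(iA1 Hfree) -!(iAB Hfree).
by repeat apply: QD; apply: QZ; [exact: Q_iA | exact: Q_E12 | exact: Q_E21 | exact: Q_iA | exact: Q_iA].
Qed.

Definition Qb (z : Abar) : bool :=
  if excluded_middle_informative (Qc z) then true else false.
Lemma QbP z : Qb z <-> Qc z.
Proof. by rewrite /Qb; case: excluded_middle_informative. Qed.
Lemma Qb_iA x : Qb (iA x). Proof. exact/QbP/Q_iA. Qed.
Lemma Qb_jM m : Qb (jM m). Proof. exact/QbP/Q_jM. Qed.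
Lemma Qb1 : Qb 1. Proof. by rewrite -(iA1 Hfree) Qb_iA. Qed.
Lemma Qblin c u v : Qb u -> Qb v -> Qb (c *: u + v).
Proof. by move=> /QbP Hu /QbP Hv; apply/QbP; apply: QD => //; apply: QZ. Qed.
Lemma QbM u v : Qb u -> Qb v -> Qb (u * v).
Proof. by move=> /QbP Hu /QbP Hv; apply/QbP; apply: QM. Qed.

Record subT := SubT { subval : Abar; sprop : Qb subval }.
HB.instance Definition _ := [isSub for subval].
HB.instance Definition _ := [Choice of subT by <:].
Lemma Qb_closed : GRing.subsemialg_closed Qb.
Proof.
have P0 : Qb 0 by have := Qblin (-1) Qb1 Qb1; rewrite scaleN1r addNr.
split.
- exact: Qb1.
- split; first exact: P0. move=> u v Pu Pv. by have := Qblin 1 Pu Pv; rewrite scale1r.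
- move=> c u Pu. by have := Qblin c Pu P0; rewrite addr0.
- move=> u v Pu Pv; exact: QbM.
Qed.
HB.instance Definition _ := GRing.SubChoice_isSubAlgebra.Build k Abar Qb subT Qb_closed.

Lemma Q_all z : Qc z.
Proof.
case: Hfree => _ [_ [He1 [He2 Huniv]]].
pose iS x : subT := SubT (Qb_iA x).
pose jS m : subT := SubT (Qb_jM m).
have hiS : alg_hom iS.
  split; [|split; [|split]].
  - by move=> x y; apply: val_inj; rewrite /= (iAD Hfree).
  - by move=> c x; apply: val_inj; rewrite /= (iAZ Hfree).
  - by move=> x y; apply: val_inj; rewrite /= (iAM Hfree).
  - by apply: val_inj; rewrite /= (iA1 Hfree).
have hjS : alg_hom jS.
  split; [|split; [|split]].
  - by move=> x y; apply: val_inj; rewrite /= (jMD Hfree).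
  - by move=> c x; apply: val_inj; rewrite /= (jMZ Hfree).
  - by move=> x y; apply: val_inj; rewrite /= (jMM Hfree).
  - by apply: val_inj; rewrite /= (jM1 Hfree).
have c1 : iS (e1A e) = jS (Mat_e11 k) by apply: val_inj; rewrite /= He1.
have c2 : iS (e2A e) = jS (Mat_e22 k) by apply: val_inj; rewrite /= He2.
have [h [[hh [hi hj]] _]] := Huniv subT iS jS hiS hjS c1 c2.
have [h0 [_ Hu]] := Huniv Abar iA jM (iA_hom Hfree) (jM_hom Hfree) He1 He2.
have hv : alg_hom (fun z => subval (h z)).
  case: hh => [hD [hZ [hM h1]]].
  split; [|split; [|split]].
  - by move=> x y; rewrite hD.
  - by move=> c x; rewrite hZ.
  - by move=> x y; rewrite hM.
  - by rewrite h1.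
have hid : alg_hom (fun z : Abar => z) by [].
have E1 : subval (h z) = h0 z := Hu _ hv (fun x => congr1 subval (hi x)) (fun y => congr1 subval (hj y)) z.
have E2 : z = h0 z := Hu _ hid (fun x => erefl) (fun y => erefl) z.
apply/QbP; rewrite E2 -E1; exact: sprop.
Qed.

Lemma Mom_all a : inAf a -> Mom a.
Proof.
move=> Ha; have := Q_all a false false; rewrite /=.
by case/inAfE: Ha => H1 H2; rewrite H1 H2.
Qed.
End Gen.

Section Comp.
Variables (k : fieldType) (n : nat) (A : algType k) (e : 'I_n.+2 -> A)
  (brA : A -> A -> tensor2 A) (Phi : 'I_n.+2 -> A)
  (Abar : algType k) (iA : A -> Abar) (jM : MatMu k -> Abar)
  (brf : Abar -> Abar -> tensor2 Abar).
Hypothesis Hidem : idempotent_family e.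
Hypothesis HqH : quasi_Hamiltonian e brA Phi.
Hypothesis Hfree : is_free_product (e1A e) (e2A e) iA jM.
Hypothesis Hfus : is_fusion_bracket e iA jM brA brf.

Local Notation e1 := (iA (e1A e)).
Local Notation e2 := (iA (e2A e)).
Local Notation eps := (eps e iA).
Local Notation E12 := (E12 jM).
Local Notation E21 := (E21 jM).
Local Notation inAf := (inAf e iA).
Local Notation gen := (gen e iA jM).
Local Notation eplus := (eplus e iA jM).
Local Notation eminus := (eminus e iA jM).
Local Notation gen_ok := (gen_ok e).

Definition Qi (q : bool) := if q then E12 else eps.
Definition Pi (p : bool) := if p then E21 else eps.

Lemma HmomA s a : teq (brA (Phi s) a) (moment_rhs (e s) (Phi s) a).
Proof. by case: HqH => _ [_ [_ H]]. Qed.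
Lemma HPhi s : e s * Phi s * e s = Phi s.
Proof. by case: HqH => _ [H _]. Qed.

Lemma bil_comp (phi : Abar -> Abar -> k) u v w z : bilin phi ->
  bilin (fun y1 y2 => phi (u * iA y1 * v) (w * iA y2 * z)).
Proof.
move=> H; apply: bil_of => *;
 rewrite ?(iAD Hfree) ?(iAZ Hfree) ?(mulrDr u) ?(mulrDl _ _ v) ?(mulrDr w) ?(mulrDl _ _ z)
   -?(scalerAr _ u) -?(scalerAl _ _ v) -?(scalerAr _ w) -?(scalerAl _ _ z)
   ?(phiDl H) ?(phiZl H) ?(phiDr H) ?(phiZr H) //.
Qed.

Lemma gen_facts p q b : gen_ok p q b ->
  eplus p * iA b = gen p q b * Qi q /\ iA b * eminus q = Pi p * gen p q b.
Proof.
rewrite /Defs.gen_ok => Hb.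
have eAid : epsA e * epsA e = epsA e.
  by rewrite /epsA mulrBl mul1r mulrBr mulr1 /e2A (eAA Hidem) subrr subr0.
have LL : forall c : bool, (if c then e2A e else epsA e) * (if c then e2A e else epsA e)
   = (if c then e2A e else epsA e).
  by case; rewrite // /e2A (eAA Hidem).
have bR : b * (if q then e2A e else epsA e) = b by rewrite -{1}Hb -mulrA LL.
have Lb : (if p then e2A e else epsA e) * b = b by rewrite -{1}Hb !mulrA LL.
have QQ : forall c, eminus c * Qi c = iA (if c then e2A e else epsA e).
  case => /=; first exact: (E21E12 Hidem Hfree).
  by rewrite (epseps Hidem Hfree) (eps_iA Hidem Hfree).
have PP : forall c, Pi c * eplus c = iA (if c then e2A e else epsA e).
  case => /=; first exact: (E21E12 Hidem Hfree).
  by rewrite (epseps Hidem Hfree) (eps_iA Hidem Hfree).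
rewrite /Defs.gen; split.
  by rewrite -mulrA QQ -mulrA -(iAM Hfree) bR.
by rewrite !mulrA PP -(iAM Hfree) Lb.
Qed.


Lemma brind_eval pX qX t p q b (phi : Abar -> Abar -> k) : bilin phi ->
  gen_ok pX qX (Phi t) -> gen_ok p q b ->
  br_ind e iA jM brA pX qX (Phi t) p q b phi =
  2^-1 * (phi (gen p q b * Qi q * iA (e t) * eminus qX)
               (gen pX qX (Phi t) * Qi qX * eminus q)
        - phi (eplus p * iA (e t) * eminus qX)
              (gen pX qX (Phi t) * Qi qX * (Pi p * gen p q b))
        + phi (gen p q b * Qi q * (Pi pX * gen pX qX (Phi t)))
              (eplus pX * iA (e t) * eminus q)
        - phi (eplus p * (Pi pX * gen pX qX (Phi t)))
              (eplus pX * iA (e t) * (Pi p * gen p q b))).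
Proof.
move=> Hphi HX Hb.
have [X1 X2] := gen_facts HX.
have [b1 b2] := gen_facts Hb.
rewrite /br_ind HmomA; last exact: bil_comp.
rewrite /moment_rhs !(iAM Hfree).
move: X1 X2 b1 b2; move: (gen p q b) (gen pX qX (Phi t)) => a X X1 X2 b1 b2.
rewrite !mulrA X1 b1.
rewrite -!(mulrA _ (iA b)) b2 -!(mulrA _ (iA (Phi t))) X2.
by rewrite !mulrA.
Qed.
End Comp.

Lemma lA (R : ringType) (x y r : R) : x * y = r -> forall w, w * x * y = w * r.
Proof. by move=> H w; rewrite -mulrA H. Qed.
Lemma absR (R : ringType) (u v x : R) : u * v = u -> v * x = 0 -> u * x = 0.
Proof. by move=> H1 H2; rewrite -H1 -mulrA H2 mulr0. Qed.
Lemma absL (R : ringType) (u v x : R) : v * u = u -> x * v = 0 -> x * u = 0.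
Proof. by move=> H1 H2; rewrite -H1 mulrA H2 mul0r. Qed.
Lemma idR (R : ringType) (u v x : R) : u * v = u -> v * x = v -> u * x = u.
Proof. by move=> H1 H2; rewrite -H1 -mulrA H2. Qed.
Lemma idL (R : ringType) (u v x : R) : v * u = u -> x * v = v -> x * u = u.
Proof. by move=> H1 H2; rewrite -H1 mulrA H2. Qed.
Lemma sandL (R : ringType) (u v : R) : v * v = v -> v * u * v = u -> v * u = u.
Proof. by move=> H1 H2; rewrite -{1}H2 !mulrA H1 H2. Qed.
Lemma sandR (R : ringType) (u v : R) : v * v = v -> v * u * v = u -> u * v = u.
Proof. by move=> H1 H2; rewrite -{1}H2 -!mulrA H1 mulrA H2. Qed.

Section Rules.
Variables (k : fieldType) (n : nat) (A : algType k) (e : 'I_n.+2 -> A)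
  (Phi : 'I_n.+2 -> A)
  (Abar : algType k) (iA : A -> Abar) (jM : MatMu k -> Abar).
Hypothesis Hidem : idempotent_family e.
Hypothesis HPhi : forall s, e s * Phi s * e s = Phi s.
Hypothesis Hfree : is_free_product (e1A e) (e2A e) iA jM.

Local Notation e1 := (iA (e1A e)).
Local Notation e2 := (iA (e2A e)).
Local Notation eps := (eps e iA).
Local Notation E12 := (E12 jM).
Local Notation E21 := (E21 jM).

Let iAM := iAM Hfree.
Let iA0 := iA0 Hfree.
Let E12E21 := E12E21 Hidem Hfree. Let E21E12 := E21E12 Hidem Hfree.
Let e1E12 := e1E12 Hidem Hfree. Let E12e2 := E12e2 Hidem Hfree.
Let e2E21 := e2E21 Hidem Hfree. Let E21e1 := E21e1 Hidem Hfree.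
Let E12e1 := E12e1 Hidem Hfree. Let e2E12 := e2E12 Hidem Hfree.
Let E21e2 := E21e2 Hidem Hfree. Let e1E21 := e1E21 Hidem Hfree.
Let E12E12 := E12E12 Hidem Hfree. Let E21E21 := E21E21 Hidem Hfree.
Let e1e1 := e1e1 Hidem Hfree. Let e2e2 := e2e2 Hidem Hfree.
Let e1e2 := e1e2 Hidem Hfree. Let e2e1 := e2e1 Hidem Hfree.
Let epsE12 := epsE12 Hidem Hfree. Let E12eps := E12eps Hidem Hfree.
Let epsE21 := epsE21 Hidem Hfree. Let E21eps := E21eps Hidem Hfree.
Let epseps := epseps Hidem Hfree. Let epse1 := epse1 Hidem Hfree.
Let e1eps := e1eps Hidem Hfree. Let epse2 := epse2 Hidem Hfree.
Let e2eps := e2eps Hidem Hfree.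

Definition baseR := (E12E21, lA E12E21, E21E12, lA E21E12, e1E12, lA e1E12,
  E12e2, lA E12e2, e2E21, lA e2E21, E21e1, lA E21e1, E12e1, lA E12e1,
  e2E12, lA e2E12, E21e2, lA E21e2, e1E21, lA e1E21, E12E12, lA E12E12,
  E21E21, lA E21E21, e1e1, lA e1e1, e2e2, lA e2e2, e1e2, lA e1e2, e2e1, lA e2e1,
  epsE12, lA epsE12, E12eps, lA E12eps, epsE21, lA epsE21, E21eps, lA E21eps,
  epseps, lA epseps, epse1, lA epse1, e1eps, lA e1eps, epse2, lA epse2, e2eps, lA e2eps).

Local Notation f0 := (iA (Phi ord0)).
Local Notation f1 := (iA (Phi 1)).
Let Hf0 : e1 * f0 * e1 = f0. Proof. by rewrite -!iAM HPhi. Qed.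
Let Hf1 : e2 * f1 * e2 = f1. Proof. by rewrite -!iAM HPhi. Qed.
Lemma e1f0 : e1 * f0 = f0. Proof using Hidem HPhi Hfree. exact: sandL e1e1 Hf0. Qed.
Lemma f0e1 : f0 * e1 = f0. Proof using Hidem HPhi Hfree. exact: sandR e1e1 Hf0. Qed.
Lemma e2f1 : e2 * f1 = f1. Proof using Hidem HPhi Hfree. exact: sandL e2e2 Hf1. Qed.
Lemma f1e2 : f1 * e2 = f1. Proof using Hidem HPhi Hfree. exact: sandR e2e2 Hf1. Qed.
Lemma epsf0 : eps * f0 = f0. Proof using Hidem HPhi Hfree. exact: idL e1f0 epse1. Qed.
Lemma f0eps : f0 * eps = f0. Proof using Hidem HPhi Hfree. exact: idR f0e1 e1eps. Qed.
Lemma e2f0 : e2 * f0 = 0. Proof using Hidem HPhi Hfree. exact: absL e1f0 e2e1. Qed.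
Lemma f0e2 : f0 * e2 = 0. Proof using Hidem HPhi Hfree. exact: absR f0e1 e1e2. Qed.
Lemma E12f0 : E12 * f0 = 0. Proof using Hidem HPhi Hfree. exact: absL e1f0 E12e1. Qed.
Lemma f0E21 : f0 * E21 = 0. Proof using Hidem HPhi Hfree. exact: absR f0e1 e1E21. Qed.
Lemma e1f1 : e1 * f1 = 0. Proof using Hidem HPhi Hfree. exact: absL e2f1 e1e2. Qed.
Lemma f1e1 : f1 * e1 = 0. Proof using Hidem HPhi Hfree. exact: absR f1e2 e2e1. Qed.
Lemma epsf1 : eps * f1 = 0. Proof using Hidem HPhi Hfree. exact: absL e2f1 epse2. Qed.
Lemma f1eps : f1 * eps = 0. Proof using Hidem HPhi Hfree. exact: absR f1e2 e2eps. Qed.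
Lemma E21f1 : E21 * f1 = 0. Proof using Hidem HPhi Hfree. exact: absL e2f1 E21e2. Qed.
Lemma f1E12 : f1 * E12 = 0. Proof using Hidem HPhi Hfree. exact: absR f1e2 e2E12. Qed.
Lemma f0f1 : f0 * f1 = 0. Proof using Hidem HPhi Hfree. exact: absR f0e1 e1f1. Qed.
Lemma f1f0 : f1 * f0 = 0. Proof using Hidem HPhi Hfree. exact: absR f1e2 e2f0. Qed.

Definition fR := (e1f0, lA e1f0, f0e1, lA f0e1, e2f1, lA e2f1, f1e2, lA f1e2,
  epsf0, lA epsf0, f0eps, lA f0eps, e2f0, lA e2f0, f0e2, lA f0e2, E12f0, lA E12f0,
  f0E21, lA f0E21, e1f1, lA e1f1, f1e1, lA f1e1, epsf1, lA epsf1, f1eps, lA f1eps,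
  E21f1, lA E21f1, f1E12, lA f1E12, f0f1, lA f0f1, f1f0, lA f1f0).

Section S.
Variable s : 'I_n.+2.
Hypotheses (s0 : s != ord0) (s1 : s != 1%R).
Local Notation es := (iA (e s)).
Local Notation f := (iA (Phi s)).
Lemma eses : es * es = es. Proof using Hidem HPhi Hfree s0 s1. by rewrite -iAM (eAA Hidem). Qed.
Lemma ese1 : es * e1 = 0. Proof using Hidem HPhi Hfree s0 s1. by rewrite -iAM /e1A (eA0 Hidem). Qed.
Lemma e1es : e1 * es = 0. Proof using Hidem HPhi Hfree s0 s1. by rewrite -iAM /e1A (eA0 Hidem) // eq_sym. Qed.
Lemma ese2 : es * e2 = 0. Proof using Hidem HPhi Hfree s0 s1. by rewrite -iAM /e2A (eA0 Hidem). Qed.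
Lemma e2es : e2 * es = 0. Proof using Hidem HPhi Hfree s0 s1. by rewrite -iAM /e2A (eA0 Hidem) // eq_sym. Qed.
Lemma eseps : es * eps = es.
Proof using Hidem HPhi Hfree s0 s1. by rewrite /Defs.eps mulrBr mulr1 ese2 subr0. Qed.
Lemma epses : eps * es = es.
Proof using Hidem HPhi Hfree s0 s1. by rewrite /Defs.eps mulrBl mul1r e2es subr0. Qed.
Lemma E12es : E12 * es = 0. Proof using Hidem HPhi Hfree s0 s1. exact: absR E12e2 e2es. Qed.
Lemma esE12 : es * E12 = 0. Proof using Hidem HPhi Hfree s0 s1. exact: absL e1E12 ese1. Qed.
Lemma E21es : E21 * es = 0. Proof using Hidem HPhi Hfree s0 s1. exact: absR E21e1 e1es. Qed.
Lemma esE21 : es * E21 = 0. Proof using Hidem HPhi Hfree s0 s1. exact: absL e2E21 ese2. Qed.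
Let Hf : es * f * es = f. Proof. by rewrite -!iAM HPhi. Qed.
Lemma esf : es * f = f. Proof using Hidem HPhi Hfree s0 s1. exact: sandL eses Hf. Qed.
Lemma fes : f * es = f. Proof using Hidem HPhi Hfree s0 s1. exact: sandR eses Hf. Qed.
Lemma fe1 : f * e1 = 0. Proof using Hidem HPhi Hfree s0 s1. exact: absR fes ese1. Qed.
Lemma e1f : e1 * f = 0. Proof using Hidem HPhi Hfree s0 s1. exact: absL esf e1es. Qed.
Lemma fe2 : f * e2 = 0. Proof using Hidem HPhi Hfree s0 s1. exact: absR fes ese2. Qed.
Lemma e2f : e2 * f = 0. Proof using Hidem HPhi Hfree s0 s1. exact: absL esf e2es. Qed.
Lemma feps : f * eps = f. Proof using Hidem HPhi Hfree s0 s1. exact: idR fes eseps. Qed.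
Lemma epsf : eps * f = f. Proof using Hidem HPhi Hfree s0 s1. exact: idL esf epses. Qed.
Lemma fE12 : f * E12 = 0. Proof using Hidem HPhi Hfree s0 s1. exact: absR fes esE12. Qed.
Lemma E12f : E12 * f = 0. Proof using Hidem HPhi Hfree s0 s1. exact: absL esf E12es. Qed.
Lemma fE21 : f * E21 = 0. Proof using Hidem HPhi Hfree s0 s1. exact: absR fes esE21. Qed.
Lemma E21f : E21 * f = 0. Proof using Hidem HPhi Hfree s0 s1. exact: absL esf E21es. Qed.
Definition sR := (eses, lA eses, ese1, lA ese1, e1es, lA e1es, ese2, lA ese2,
  e2es, lA e2es, eseps, lA eseps, epses, lA epses, E12es, lA E12es, esE12, lA esE12,
  E21es, lA E21es, esE21, lA esE21, esf, lA esf, fes, lA fes, fe1, lA fe1,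
  e1f, lA e1f, fe2, lA fe2, e2f, lA e2f, feps, lA feps, epsf, lA epsf,
  fE12, lA fE12, E12f, lA E12f, fE21, lA fE21, E21f, lA E21f).
End S.
End Rules.

Section P1.
Variables (k : fieldType) (n : nat) (A : algType k) (e : 'I_n.+2 -> A)
  (brA : A -> A -> tensor2 A) (Phi : 'I_n.+2 -> A)
  (Abar : algType k) (iA : A -> Abar) (jM : MatMu k -> Abar)
  (brf : Abar -> Abar -> tensor2 Abar).
Hypothesis Hidem : idempotent_family e.
Hypothesis HqH : quasi_Hamiltonian e brA Phi.
Hypothesis Hfree : is_free_product (e1A e) (e2A e) iA jM.
Hypothesis Hfus : is_fusion_bracket e iA jM brA brf.

Local Notation e1 := (iA (e1A e)).
Local Notation e2 := (iA (e2A e)).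
Local Notation eps := (eps e iA).
Local Notation E12 := (E12 jM).
Local Notation E21 := (E21 jM).
Local Notation inAf := (inAf e iA).
Local Notation gen := (gen e iA jM).
Local Notation eplus := (eplus e iA jM).
Local Notation eminus := (eminus e iA jM).
Local Notation gen_ok := (gen_ok e).

Let HPhi := HPhi HqH.
Let Hgenf : forall p q alpha p' q' beta, gen_ok p q alpha -> gen_ok p' q' beta ->
    teq (brf (gen p q alpha) (gen p' q' beta))
        (tadd (br_ind e iA jM brA p q alpha p' q' beta) (br_fus e iA jM p q alpha p' q' beta)).
Proof. by case: Hfus. Qed.

Lemma TrE1_zero p q b (psi : Abar -> Abar -> k) : (forall x y, psi x y = 0) ->
  TrE1 e iA jM p q b psi = 0.
Proof.
by move=> H; case: p; case: q; rewrite /TrE1 /= /tadd /tscale /ev2 /tzero ?H ?mulr0 ?addr0.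
Qed.
Lemma TrE2_zero p q b (psi : Abar -> Abar -> k) : (forall x y, psi x y = 0) ->
  TrE2 e iA jM p q b psi = 0.
Proof.
by move=> H; case: p; case: q; rewrite /TrE2 /= /tadd /tscale /ev2 /tzero ?H ?mulr0 ?addr0.
Qed.

Lemma epsAA : epsA e * epsA e = epsA e.
Proof. by rewrite /epsA mulrBl mul1r mulrBr mulr1 /e2A (eAA Hidem) subrr subr0. Qed.
Lemma e2AA : e2A e * e2A e = e2A e.
Proof. by rewrite /e2A (eAA Hidem). Qed.
Lemma sideL (L R b : A) : L * L = L -> L * b * R = b -> L * b = b.
Proof. by move=> H1 H2; rewrite -H2 !mulrA H1. Qed.
Lemma sideR (L R b : A) : R * R = R -> L * b * R = b -> b * R = b.
Proof. by move=> H1 H2; rewrite -H2 -!mulrA H1. Qed.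

Lemma bL0 q b : gen_ok false q b -> eps * iA b = iA b.
Proof. by move=> /(sideL epsAA) H; rewrite (eps_iA Hidem Hfree) -(iAM Hfree) H. Qed.
Lemma bL1 q b : gen_ok true q b -> e2 * iA b = iA b.
Proof. by move=> /(sideL e2AA) H; rewrite -(iAM Hfree) H. Qed.
Lemma bR0 p b : gen_ok p false b -> iA b * eps = iA b.
Proof. by move=> /(sideR epsAA) H; rewrite (eps_iA Hidem Hfree) -(iAM Hfree) H. Qed.
Lemma bR1 p b : gen_ok p true b -> iA b * e2 = iA b.
Proof. by move=> /(sideR e2AA) H; rewrite -(iAM Hfree) H. Qed.


Lemma epsA_es s : s != 1%R -> epsA e * e s = e s.
Proof. by move=> s1; rewrite /epsA mulrBl mul1r /e2A (eA0 Hidem) ?subr0 // eq_sym. Qed.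
Lemma es_epsA s : s != 1%R -> e s * epsA e = e s.
Proof. by move=> s1; rewrite /epsA mulrBr mulr1 /e2A (eA0 Hidem) ?subr0. Qed.
Lemma genok_ff s : s != 1%R -> gen_ok false false (Phi s).
Proof.
move=> s1; rewrite /Defs.gen_ok /= -HPhi.
by rewrite !mulrA epsA_es // -!mulrA es_epsA.
Qed.

Lemma TrE1_ff x : TrE1 e iA jM false false x =
  tadd (ev2 (gen false false x * e1b e iA) (e1b e iA))
       (tscale (-1) (ev2 (e1b e iA) (e1b e iA * gen false false x))).
Proof. by []. Qed.
Lemma TrE2_ff x : TrE2 e iA jM false false x = @tzero _ Abar.
Proof. by []. Qed.
Lemma TrE1_tt x : TrE1 e iA jM true true x = @tzero _ Abar.
Proof. by []. Qed.
Lemma TrE2_tt x : TrE2 e iA jM true true x =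
  tadd (ev2 (gen true true x * e1b e iA) (e1b e iA))
       (tscale (-1) (ev2 (e1b e iA) (e1b e iA * gen true true x))).
Proof. by []. Qed.

Lemma part1_gen s : s != ord0 -> s != 1%R -> forall p q b, gen_ok p q b ->
  Mom brf (gen false false (Phi s)) (iA (e s)) (gen p q b).
Proof.
move=> s0 s1 p q b Hb phi Hphi.
have HX := genok_ff s1.
rewrite Hgenf // /tadd (brind_eval Hidem HqH Hfree) //.
have Xe1 : gen false false (Phi s) * e1b e iA = 0.
  by rewrite /Defs.gen /e1b /= ?mulrA ?(baseR Hidem Hfree) ?(sR Hidem HPhi Hfree s0 s1) ?mulr0 ?mul0r.
have e1X : e1b e iA * gen false false (Phi s) = 0.
  by rewrite /Defs.gen /e1b /= ?mulrA ?(baseR Hidem Hfree) ?(sR Hidem HPhi Hfree s0 s1) ?mulr0 ?mul0r.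
rewrite /br_fus /tadd /tscale /tprod TrE2_ff TrE1_ff /tadd /ev2 /tscale /tzero Xe1 e1X.
rewrite TrE2_zero; last by move=> x y; rewrite mul0r (phi0r Hphi).
rewrite TrE2_zero; last by move=> x y; rewrite mulr0 (phi0l Hphi).
rewrite /moment_rhs /Qi /Pi.
have B := baseR Hidem Hfree.
have S := sR Hidem HPhi Hfree s0 s1.
move: Hb; case: p => Hb; case: q Hb => Hb; rewrite /Defs.gen /=.
- have l := bL1 Hb; have r := bR1 Hb.
  have l1 := absL l (epse2 Hidem Hfree); have l2 := absL l (e1e2 Hidem Hfree);
  have l3 := absL l (E21e2 Hidem Hfree); have l4 := absL l (ese2 Hidem HPhi Hfree s0 s1);
  have l5 := absL l (fe2 Hidem HPhi Hfree s0 s1).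
  have r1 := absR r (e2eps Hidem Hfree); have r2 := absR r (e2e1 Hidem Hfree);
  have r3 := absR r (e2E12 Hidem Hfree); have r4 := absR r (e2es Hidem HPhi Hfree s0 s1);
  have r5 := absR r (e2f Hidem HPhi Hfree s0 s1).
  have L := (l, lA l, l1, lA l1, l2, lA l2, l3, lA l3, l4, lA l4, l5, lA l5).
  have R := (r, lA r, r1, lA r1, r2, lA r2, r3, lA r3, r4, lA r4, r5, lA r5).
  have As : forall x y z : Abar, x * (y * z) = x * y * z := @mulrA _.
  have Z1 : forall x : Abar, x * 0 = 0 := @mulr0 _.
  have Z2 : forall x : Abar, 0 * x = 0 := @mul0r _.
  have P1 : forall x : Abar, phi 0 x = 0 := phi0l Hphi.
  have P2 : forall x : Abar, phi x 0 = 0 := phi0r Hphi.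
  move: B S L R As Z1 Z2 P1 P2.
  move: (E12) (E21) (eps) (e1) (e2) (iA b) (iA (Phi s)) (iA (e s)).
  move=> x12 x21 xe x1 x2 xb xf xs.
  move: (@GRing.mul (GRing.Algebra.Exports.GRing_Algebra__to__GRing_PzSemiRing Abar)) (0 : Abar).
  move=> m z B S L R As Z1 Z2 P1 P2.
  rewrite ?As ?B ?S ?L ?R ?Z1 ?Z2 ?P1 ?P2.
  rewrite ?As ?B ?S ?L ?R ?Z1 ?Z2 ?P1 ?P2.
  ring.
- have l := bL1 Hb; have r := bR0 Hb.
  have l1 := absL l (epse2 Hidem Hfree); have l2 := absL l (e1e2 Hidem Hfree);
  have l3 := absL l (E21e2 Hidem Hfree); have l4 := absL l (ese2 Hidem HPhi Hfree s0 s1);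
  have l5 := absL l (fe2 Hidem HPhi Hfree s0 s1).
  have r1 := absR r (epse2 Hidem Hfree); have r2 := absR r (epsE21 Hidem Hfree).
  have L := (l, lA l, l1, lA l1, l2, lA l2, l3, lA l3, l4, lA l4, l5, lA l5).
  have R := (r, lA r, r1, lA r1, r2, lA r2).
  have As : forall x y z : Abar, x * (y * z) = x * y * z := @mulrA _.
  have Z1 : forall x : Abar, x * 0 = 0 := @mulr0 _.
  have Z2 : forall x : Abar, 0 * x = 0 := @mul0r _.
  have P1 : forall x : Abar, phi 0 x = 0 := phi0l Hphi.
  have P2 : forall x : Abar, phi x 0 = 0 := phi0r Hphi.
  move: B S L R As Z1 Z2 P1 P2.
  move: (E12) (E21) (eps) (e1) (e2) (iA b) (iA (Phi s)) (iA (e s)).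
  move=> x12 x21 xe x1 x2 xb xf xs.
  move: (@GRing.mul (GRing.Algebra.Exports.GRing_Algebra__to__GRing_PzSemiRing Abar)) (0 : Abar).
  move=> m z B S L R As Z1 Z2 P1 P2.
  rewrite ?As ?B ?S ?L ?R ?Z1 ?Z2 ?P1 ?P2.
  rewrite ?As ?B ?S ?L ?R ?Z1 ?Z2 ?P1 ?P2.
  ring.
- have l := bL0 Hb; have r := bR1 Hb.
  have l1 := absL l (e2eps Hidem Hfree); have l2 := absL l (E12eps Hidem Hfree).
  have r1 := absR r (e2eps Hidem Hfree); have r2 := absR r (e2e1 Hidem Hfree);
  have r3 := absR r (e2E12 Hidem Hfree); have r4 := absR r (e2es Hidem HPhi Hfree s0 s1);
  have r5 := absR r (e2f Hidem HPhi Hfree s0 s1).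
  have L := (l, lA l, l1, lA l1, l2, lA l2).
  have R := (r, lA r, r1, lA r1, r2, lA r2, r3, lA r3, r4, lA r4, r5, lA r5).
  have As : forall x y z : Abar, x * (y * z) = x * y * z := @mulrA _.
  have Z1 : forall x : Abar, x * 0 = 0 := @mulr0 _.
  have Z2 : forall x : Abar, 0 * x = 0 := @mul0r _.
  have P1 : forall x : Abar, phi 0 x = 0 := phi0l Hphi.
  have P2 : forall x : Abar, phi x 0 = 0 := phi0r Hphi.
  move: B S L R As Z1 Z2 P1 P2.
  move: (E12) (E21) (eps) (e1) (e2) (iA b) (iA (Phi s)) (iA (e s)).
  move=> x12 x21 xe x1 x2 xb xf xs.
  move: (@GRing.mul (GRing.Algebra.Exports.GRing_Algebra__to__GRing_PzSemiRing Abar)) (0 : Abar).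
  move=> m z B S L R As Z1 Z2 P1 P2.
  rewrite ?As ?B ?S ?L ?R ?Z1 ?Z2 ?P1 ?P2.
  rewrite ?As ?B ?S ?L ?R ?Z1 ?Z2 ?P1 ?P2.
  ring.
- have l := bL0 Hb; have r := bR0 Hb.
  have l1 := absL l (e2eps Hidem Hfree); have l2 := absL l (E12eps Hidem Hfree).
  have r1 := absR r (epse2 Hidem Hfree); have r2 := absR r (epsE21 Hidem Hfree).
  have L := (l, lA l, l1, lA l1, l2, lA l2).
  have R := (r, lA r, r1, lA r1, r2, lA r2).
  have As : forall x y z : Abar, x * (y * z) = x * y * z := @mulrA _.
  have Z1 : forall x : Abar, x * 0 = 0 := @mulr0 _.
  have Z2 : forall x : Abar, 0 * x = 0 := @mul0r _.
  have P1 : forall x : Abar, phi 0 x = 0 := phi0l Hphi.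
  have P2 : forall x : Abar, phi x 0 = 0 := phi0r Hphi.
  move: B S L R As Z1 Z2 P1 P2.
  move: (E12) (E21) (eps) (e1) (e2) (iA b) (iA (Phi s)) (iA (e s)).
  move=> x12 x21 xe x1 x2 xb xf xs.
  move: (@GRing.mul (GRing.Algebra.Exports.GRing_Algebra__to__GRing_PzSemiRing Abar)) (0 : Abar).
  move=> m z B S L R As Z1 Z2 P1 P2.
  rewrite ?As ?B ?S ?L ?R ?Z1 ?Z2 ?P1 ?P2.
  rewrite ?As ?B ?S ?L ?R ?Z1 ?Z2 ?P1 ?P2.
  ring.
Qed.

Let Hdb := proj1 Hfus.
Lemma leib1 x y a (phi : Abar -> Abar -> k) : bilin phi -> inAf x -> inAf y -> inAf a ->
  brf (x * y) a phi = brf x a (fun u v => phi (u * y) v) + brf y a (fun u v => phi u (x * v)).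
Proof.
case: Hdb => _ [_ [_ [_ [Hsk Hlb]]]] Hphi Hx Hy Ha.
have Hxy := inAfM Hidem Hfree Hx Hy.
rewrite (Hsk _ _ Hxy Ha _ Hphi) /tscale /tswap.
rewrite (Hlb _ _ _ Ha Hx Hy _ (bil_swap Hphi)) /tadd /rmul /lmul.
rewrite (Hsk _ _ Ha Hx _ (bil_rmul y (bil_swap Hphi))).
rewrite (Hsk _ _ Ha Hy _ (bil_lmul x (bil_swap Hphi))).
rewrite /tscale /tswap; ring.
Qed.

Lemma genok_tt : gen_ok true true (Phi 1).
Proof. by rewrite /Defs.gen_ok /= /e2A HPhi. Qed.

Lemma part2_gen p q b : gen_ok p q b ->
  Mom brf (gen false false (Phi ord0) * gen true true (Phi 1)) e1 (gen p q b).
Proof.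
move=> Hb phi Hphi.
have H1 := genok_ff (o01 n).
have H2 := genok_tt.
have I1 : inAf (gen false false (Phi ord0)) by exact: inAf_corner.
have I2 : inAf (gen true true (Phi 1)) by exact: inAf_corner.
have Ia : inAf (gen p q b) by exact: inAf_corner.
rewrite leib1 //.
rewrite (Hgenf H1 Hb (bil_irmul _ Hphi)) (Hgenf H2 Hb (bil_ilmul _ Hphi)) /tadd.
rewrite (brind_eval Hidem HqH Hfree (bil_irmul _ Hphi)) //.
rewrite (brind_eval Hidem HqH Hfree (bil_ilmul _ Hphi)) //.
rewrite /br_fus /tadd /tscale /tprod TrE2_ff TrE1_ff TrE1_tt TrE2_tt /tadd /ev2 /tscale /tzero.
rewrite /moment_rhs /Qi /Pi.
have B := baseR Hidem Hfree.
have F := fR Hidem HPhi Hfree.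
clear Ia; move: Hb; case: p => Hb; case: q Hb => Hb; rewrite /TrE1 /TrE2 /= /tadd /ev2 /tscale /tzero /Defs.gen /= /e1b.
- have l := bL1 Hb; have r := bR1 Hb.
  have l1 := absL l (epse2 Hidem Hfree); have l2 := absL l (e1e2 Hidem Hfree);
  have l3 := absL l (E21e2 Hidem Hfree); have l4 := absL l (f0e2 Hidem HPhi Hfree).
  have L := (l, lA l, l1, lA l1, l2, lA l2, l3, lA l3, l4, lA l4).
  have r1 := absR r (e2eps Hidem Hfree); have r2 := absR r (e2e1 Hidem Hfree);
  have r3 := absR r (e2E12 Hidem Hfree); have r4 := absR r (e2f0 Hidem HPhi Hfree).
  have R := (r, lA r, r1, lA r1, r2, lA r2, r3, lA r3, r4, lA r4).
  have As : forall x y z : Abar, x * (y * z) = x * y * z := @mulrA _.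
  have Z1 : forall x : Abar, x * 0 = 0 := @mulr0 _.
  have Z2 : forall x : Abar, 0 * x = 0 := @mul0r _.
  have P1 : forall x : Abar, phi 0 x = 0 := phi0l Hphi.
  have P2 : forall x : Abar, phi x 0 = 0 := phi0r Hphi.
  move: B F L R As Z1 Z2 P1 P2.
  move: (E12) (E21) (eps) (e1) (e2) (iA b) (iA (Phi ord0)) (iA (Phi 1)).
  move=> x12 x21 xe x1 x2 xb xf0 xf1.
  move: (@GRing.mul (GRing.Algebra.Exports.GRing_Algebra__to__GRing_PzSemiRing Abar)) (0 : Abar).
  move=> m z B F L R As Z1 Z2 P1 P2.
  Time rewrite ?As ?B ?F ?L ?R ?Z1 ?Z2 ?P1 ?P2.
  Time rewrite ?As ?B ?F ?L ?R ?Z1 ?Z2 ?P1 ?P2.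
  Time ring.
- have l := bL1 Hb; have r := bR0 Hb.
  have l1 := absL l (epse2 Hidem Hfree); have l2 := absL l (e1e2 Hidem Hfree);
  have l3 := absL l (E21e2 Hidem Hfree); have l4 := absL l (f0e2 Hidem HPhi Hfree).
  have L := (l, lA l, l1, lA l1, l2, lA l2, l3, lA l3, l4, lA l4).
  have r1 := absR r (epse2 Hidem Hfree); have r2 := absR r (epsE21 Hidem Hfree);
  have r3 := absR r (epsf1 Hidem HPhi Hfree).
  have R := (r, lA r, r1, lA r1, r2, lA r2, r3, lA r3).
  have As : forall x y z : Abar, x * (y * z) = x * y * z := @mulrA _.
  have Z1 : forall x : Abar, x * 0 = 0 := @mulr0 _.
  have Z2 : forall x : Abar, 0 * x = 0 := @mul0r _.
  have P1 : forall x : Abar, phi 0 x = 0 := phi0l Hphi.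
  have P2 : forall x : Abar, phi x 0 = 0 := phi0r Hphi.
  move: B F L R As Z1 Z2 P1 P2.
  move: (E12) (E21) (eps) (e1) (e2) (iA b) (iA (Phi ord0)) (iA (Phi 1)).
  move=> x12 x21 xe x1 x2 xb xf0 xf1.
  move: (@GRing.mul (GRing.Algebra.Exports.GRing_Algebra__to__GRing_PzSemiRing Abar)) (0 : Abar).
  move=> m z B F L R As Z1 Z2 P1 P2.
  Time rewrite ?As ?B ?F ?L ?R ?Z1 ?Z2 ?P1 ?P2.
  Time rewrite ?As ?B ?F ?L ?R ?Z1 ?Z2 ?P1 ?P2.
  Time ring.
- have l := bL0 Hb; have r := bR1 Hb.
  have l1 := absL l (e2eps Hidem Hfree); have l2 := absL l (E12eps Hidem Hfree);
  have l3 := absL l (f1eps Hidem HPhi Hfree).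
  have L := (l, lA l, l1, lA l1, l2, lA l2, l3, lA l3).
  have r1 := absR r (e2eps Hidem Hfree); have r2 := absR r (e2e1 Hidem Hfree);
  have r3 := absR r (e2E12 Hidem Hfree); have r4 := absR r (e2f0 Hidem HPhi Hfree).
  have R := (r, lA r, r1, lA r1, r2, lA r2, r3, lA r3, r4, lA r4).
  have As : forall x y z : Abar, x * (y * z) = x * y * z := @mulrA _.
  have Z1 : forall x : Abar, x * 0 = 0 := @mulr0 _.
  have Z2 : forall x : Abar, 0 * x = 0 := @mul0r _.
  have P1 : forall x : Abar, phi 0 x = 0 := phi0l Hphi.
  have P2 : forall x : Abar, phi x 0 = 0 := phi0r Hphi.
  move: B F L R As Z1 Z2 P1 P2.
  move: (E12) (E21) (eps) (e1) (e2) (iA b) (iA (Phi ord0)) (iA (Phi 1)).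
  move=> x12 x21 xe x1 x2 xb xf0 xf1.
  move: (@GRing.mul (GRing.Algebra.Exports.GRing_Algebra__to__GRing_PzSemiRing Abar)) (0 : Abar).
  move=> m z B F L R As Z1 Z2 P1 P2.
  Time rewrite ?As ?B ?F ?L ?R ?Z1 ?Z2 ?P1 ?P2.
  Time rewrite ?As ?B ?F ?L ?R ?Z1 ?Z2 ?P1 ?P2.
  Time ring.
- have l := bL0 Hb; have r := bR0 Hb.
  have l1 := absL l (e2eps Hidem Hfree); have l2 := absL l (E12eps Hidem Hfree);
  have l3 := absL l (f1eps Hidem HPhi Hfree).
  have L := (l, lA l, l1, lA l1, l2, lA l2, l3, lA l3).
  have r1 := absR r (epse2 Hidem Hfree); have r2 := absR r (epsE21 Hidem Hfree);
  have r3 := absR r (epsf1 Hidem HPhi Hfree).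
  have R := (r, lA r, r1, lA r1, r2, lA r2, r3, lA r3).
  have As : forall x y z : Abar, x * (y * z) = x * y * z := @mulrA _.
  have Z1 : forall x : Abar, x * 0 = 0 := @mulr0 _.
  have Z2 : forall x : Abar, 0 * x = 0 := @mul0r _.
  have P1 : forall x : Abar, phi 0 x = 0 := phi0l Hphi.
  have P2 : forall x : Abar, phi x 0 = 0 := phi0r Hphi.
  move: B F L R As Z1 Z2 P1 P2.
  move: (E12) (E21) (eps) (e1) (e2) (iA b) (iA (Phi ord0)) (iA (Phi 1)).
  move=> x12 x21 xe x1 x2 xb xf0 xf1.
  move: (@GRing.mul (GRing.Algebra.Exports.GRing_Algebra__to__GRing_PzSemiRing Abar)) (0 : Abar).
  move=> m z B F L R As Z1 Z2 P1 P2.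
  Time rewrite ?As ?B ?F ?L ?R ?Z1 ?Z2 ?P1 ?P2.
  Time rewrite ?As ?B ?F ?L ?R ?Z1 ?Z2 ?P1 ?P2.
  Time ring.
Qed.

End P1.

Unset Implicit Arguments.

Theorem lemma2p21 (k : fieldType) (char0 : [pchar k] =i pred0)
  (n : nat) (A : algType k) (e : 'I_n.+2 -> A)
  (brA : A -> A -> tensor2 A) (Phi : 'I_n.+2 -> A)
  (Abar : algType k) (iA : A -> Abar) (jM : MatMu k -> Abar)
  (brf : Abar -> Abar -> tensor2 Abar) :
  idempotent_family e ->
  quasi_Hamiltonian e brA Phi ->
  is_free_product (e1A e) (e2A e) iA jM ->
  is_fusion_bracket e iA jM brA brf ->
  (forall (s : 'I_n.+2), s != ord0 -> s != 1 -> forall a : Abar, inAf e iA a ->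
     teq (brf (TrPhi e iA jM Phi s) a)
         (moment_rhs (iA (e s)) (TrPhi e iA jM Phi s) a)) /\
  (let Phif1 := TrPhi e iA jM Phi ord0 * TrPhi e iA jM Phi 1 in
   forall a : Abar, inAf e iA a ->
     teq (brf Phif1 a) (moment_rhs (e1b e iA) Phif1 a)).
Proof.
move=> Hidem HqH Hfree Hfus.
have Hdb := proj1 Hfus.
split.
- move=> s s0 s1 a Ha.
  have -> : TrPhi e iA jM Phi s = gen e iA jM false false (Phi s) by rewrite /TrPhi (negbTE s1).
  apply: (Mom_all Hidem Hfree Hdb) => //.
  + exact: inAf_corner.
  + exact: (part1_gen Hidem HqH Hfree Hfus s0 s1).
- move=> Phif1 a Ha; rewrite /Phif1.
  have -> : TrPhi e iA jM Phi ord0 = gen e iA jM false false (Phi ord0).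
    by rewrite /TrPhi (negbTE (o01 n)).
  have -> : TrPhi e iA jM Phi 1 = gen e iA jM true true (Phi 1) by rewrite /TrPhi eqxx.
  apply: (Mom_all Hidem Hfree Hdb) => //.
  + by apply: (inAfM Hidem Hfree); exact: inAf_corner.
  + exact: (part2_gen Hidem HqH Hfree Hfus).
Qed.
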